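(* For every $r\ge\sigma>0$, the distribution $\mathcal{N}(0,\sigma^2I_d)$ has $(r,\frac{\sigma^2}{r},\frac{1}{20})$ margins.
   Context: A distribution $\mathcal{D}$ on $\mathbb{R}^d$ has $(r,\alpha,\gamma)$ margins if for all $\beta\in\mathbb{R}^d\setminus\{0\}$ and all $b\le r\|\beta\|$, with $e\sim\mathcal{D}$, $\Pr[\beta\cdot e>b+\alpha\|\beta\|\mid\beta\cdot e\ge b]\ge\gamma$. *)

(* Defs.v *)
From HB Require Import structures.
From mathcomp Require Import all_boot all_order all_algebra.
From mathcomp Require Import all_classical all_reals all_analysis.
Set Implicit Arguments. Unset Strict Implicit. Unset Printing Implicit Defensive.
Import Order.TTheory GRing.Theory Num.Theory.
Local Open Scope classical_set_scope.
Local Open Scope ring_scope.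

Section Defs.
Context {R : realType}.

Definition dotp (d : nat) (u v : 'rV[R]_d) : R := \sum_(i < d) u 0 i * v 0 i.

(* Euclidean norm (mathcomp's matrix norm is the sup norm, so define it). *)
Definition enorm (d : nat) (u : 'rV[R]_d) : R := Num.sqrt (dotp u u).

(* d-fold iterated Lebesgue integral of F against N(0, s^2) in every
   coordinate (Fubini/Tonelli: this is integration against the product
   measure N(0, s^2)^{\otimes d} = N(0, s^2 I_d)). The list l collects
   the coordinates already integrated, innermost first. *)
Fixpoint gauss_iter_int (s : R) (d : nat) (F : seq R -> \bar R) : \bar R :=
  match d with
  | 0 => F [::]
  | d'.+1 => (\int[normal_prob 0 s]_x gauss_iter_int s d' (fun l => F (x :: l)))%E
  end.

Definition vec_of_seq (d : nat) (l : seq R) : 'rV[R]_d := \row_(i < d) nth 0 l i.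

Definition gauss_prob (s : R) (d : nat) (A : set 'rV[R]_d) : \bar R :=
  gauss_iter_int s d (fun l => (\1_A (vec_of_seq d l) : R)%:E).

Definition cond_prob (d : nat) (P : set 'rV[R]_d -> \bar R)
  (A B : set 'rV[R]_d) : R := fine (P (A `&` B)) / fine (P B).

Definition has_margins (d : nat) (P : set 'rV[R]_d -> \bar R)
  (r alpha gamma : R) : Prop :=
  forall (beta : 'rV[R]_d) (b : R), beta != 0 -> b <= r * enorm beta ->
    gamma <= cond_prob P [set e | b + alpha * enorm beta < dotp beta e]
                         [set e | b <= dotp beta e].

End Defs.

(* Main.v *)
Require Import Defs.
From HB Require Import structures.
From mathcomp Require Import all_boot all_order all_algebra.
From mathcomp Require Import all_classical all_reals all_analysis.
From mathcomp Require Import ring lra measurable_realfun.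
Import Order.TTheory GRing.Theory Num.Theory.
Local Open Scope classical_set_scope.
Local Open Scope ring_scope.

Section Subst.
Context {R : realType}.
Local Notation mu := (@lebesgue_measure R).

Lemma preimage_affine_oc (a c p q : R) : 0 < a ->
  (fun x : R => a * x + c) @^-1` `]p, q] = `](p - c) / a, (q - c) / a]%classic.
Proof.
move=> a0; apply/seteqP; split => x /=; rewrite !in_itv /= => /andP[h1 h2];
  apply/andP; split.
- by rewrite ltr_pdivrMr // mulrC ltrBlDr.
- by rewrite ler_pdivlMr // mulrC lerBrDr.
- by rewrite -ltrBlDr mulrC -ltr_pdivrMr.
- by rewrite -lerBrDr mulrC -ler_pdivlMr.
Qed.

Lemma measurable_affine (a c : R) : measurable_fun setT (fun x : R => a * x + c).
Proof. by apply: measurable_funD => //; apply: measurable_funM. Qed.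

Section affine.
Variables (a c : R) (a0 : 0 < a).
Definition aff (x : measurableTypeR R) : measurableTypeR R := a * x + c.
Let maff : measurable_fun setT aff. Proof. exact: measurable_affine. Qed.
Definition nuaff := pushforward mu aff.

Let nuaff0 : nuaff set0 = 0%E.
Proof. by rewrite /nuaff /pushforward preimage_set0 measure0. Qed.

Let nuaff_ge0 A : (0 <= nuaff A)%E.
Proof. by apply: measure_ge0. Qed.

Let nuaff_sigma_additive : semi_sigma_additive nuaff.
Proof.
move=> F mF tF mUF; rewrite /nuaff /pushforward preimage_bigcup.
apply: measure_semi_sigma_additive.
- by move=> n; rewrite -[X in measurable X]setTI; exact: maff.
- apply/trivIsetP => /= i j _ _ ij; rewrite -preimage_setI.
  by move/trivIsetP : tF => /(_ _ _ _ _ ij) ->//; rewrite preimage_set0.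
- by rewrite -preimage_bigcup -[X in measurable X]setTI; exact: maff.
Qed.

HB.instance Definition _ := isMeasure.Build _ _ _
  nuaff nuaff0 nuaff_ge0 nuaff_sigma_additive.

Lemma leb_affine (A : set R) : measurable A ->
  mu A = mscale (NngNum (ltW a0)) nuaff A.
Proof.
apply: lebesgue_measure_unique => _ [[p q] _ <-] /=.
rewrite /nuaff /pushforward.
rewrite /mscale /=.
rewrite /nuaff /pushforward.
have -> : aff @^-1` (`]p, q]%classic : set (measurableTypeR R)) = (`](p - c) / a, (q - c) / a]%classic : set (measurableTypeR R)) by exact: preimage_affine_oc.
rewrite !lebesgue_measure_itv /=.
rewrite !lte_fin ltr_pM2r ?invr_gt0 // ltrD2r.
case: ifPn => _; last by rewrite mule0.
by rewrite -EFinD -EFinM; congr (_%:E); field; rewrite gt_eqF.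
Qed.

Lemma integral_affine (G : R -> \bar R) :
  measurable_fun setT G -> (forall x, 0 <= G x)%E ->
  (\int[mu]_x G (a * x + c)%R = (a^-1)%:E * \int[mu]_x G x)%E.
Proof.
move=> mG G0.
have -> : (\int[mu]_x G x = \int[mscale (NngNum (ltW a0)) nuaff]_x G x)%E.
  by apply: eq_measure_integral => B mB _; exact: leb_affine.
rewrite ge0_integral_mscale //= /nuaff ge0_integral_pushforward //=.
rewrite preimage_setT muleA -EFinM mulVf ?gt_eqF // mul1e.
by [].
Qed.
End affine.

Lemma integral_oppr (G : R -> \bar R) :
  measurable_fun setT G -> (forall x, 0 <= G x)%E ->
  (\int[mu]_x G (- x)%R = \int[mu]_x G x)%E.
Proof.
move=> mG G0.
have -> : (\int[mu]_x G x = \int[pushforward mu (-%R : R -> measurableTypeR R)]_x G x)%E.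
  by apply: eq_measure_integral => B mB _; exact/esym/lebesgue_measureN.
rewrite ge0_integral_pushforward //= ?preimage_setT //.
Qed.

End Subst.

Section NormalInt.
Context {R : realType}.
Local Notation mu := (@lebesgue_measure R).

Lemma integral_normal (m s : R) (f : R -> \bar R) :
  measurable_fun setT f -> (forall x, 0 <= f x)%E ->
  (\int[normal_prob m s]_x f x = \int[mu]_x (f x * (normal_pdf m s x)%:E))%E.
Proof.
move=> mf f0.
have numu := @normal_prob_dominates R m s.
rewrite -(@Radon_Nikodym_SigmaFinite.change_of_variables _ _ _
   (normal_prob m s) mu numu f setT) //.
apply: ae_eq_integral => //.
- apply: emeasurable_funM => //.
  exact: measurable_int (Radon_Nikodym_SigmaFinite.f_integrable numu).
- apply: emeasurable_funM => //.
  by apply/measurable_EFinP; exact: measurable_normal_pdf.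
- apply: ae_eqe_mul2l.
  apply: integral_ae_eq => //.
  + exact: Radon_Nikodym_SigmaFinite.f_integrable.
  + by apply/measurable_EFinP; exact: measurable_normal_pdf.
  + move=> E _ mE.
    by rewrite -Radon_Nikodym_SigmaFinite.f_integral.
Qed.

End NormalInt.

Section Pdf.
Context {R : realType}.
Local Notation mu := (@lebesgue_measure R).

Definition kk : R := Num.sqrt (pi * 2).

Lemma kk_gt0 : 0 < kk.
Proof. by rewrite sqrtr_gt0 mulr_gt0 // pi_gt0. Qed.

Lemma pdfE (m s x : R) : 0 < s ->
  normal_pdf m s x = (s * kk)^-1 * expR (- (x - m) ^+ 2 / (s ^+ 2 * 2)).
Proof.
move=> s0; rewrite normal_pdfE ?gt_eqF //= /normal_peak /normal_fun.
congr (_^-1 * expR (_ / _)); last by rewrite mulr_natr.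
rewrite /kk -mulrnAr sqrtrM ?sqr_ge0 // sqrtr_sqr ger0_norm ?ltW //.
by rewrite mulr_natr.
Qed.

Lemma pdf_scale (m t y : R) : 0 < t ->
  normal_pdf m t y = t^-1 * normal_pdf 0 1 ((y - m) / t).
Proof.
move=> t0; rewrite !pdfE //.
set E1 := expR _; set E2 := expR _.
have -> : E2 = E1.
  by rewrite /E1 /E2; congr expR; field; rewrite gt_eqF.
by field; rewrite ?gt_eqF ?kk_gt0.
Qed.

Lemma integral_normal_scale (m t : R) (g : R -> \bar R) : 0 < t ->
  measurable_fun setT g -> (forall x, 0 <= g x)%E ->
  (\int[normal_prob 0 1]_z g (t * z + m)%R = \int[normal_prob m t]_y g y)%E.
Proof.
move=> t0 mg g0.
have mga : measurable_fun setT (fun z : R => g (t * z + m)).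
  exact: (measurableT_comp mg (measurable_affine t m)).
rewrite (integral_normal _ _ _ mga); last by move=> z; exact: g0.
rewrite (integral_normal _ _ _ mg g0).
pose G y := (g y * (normal_pdf 0 1 ((y - m) / t))%:E)%E.
have mG : measurable_fun setT G.
  apply: emeasurable_funM => //; apply/measurable_EFinP.
  apply: (measurableT_comp (measurable_normal_pdf 0 1)).
  by apply: measurable_funM => //; exact: measurable_funB.
transitivity (\int[mu]_z G (t * z + m)%R)%E.
  apply: eq_integral => z _; rewrite /G; congr (_ * (normal_pdf _ _ _)%:E)%E.
  by rewrite addrK; field; rewrite gt_eqF.
rewrite integral_affine //; last first.
  by move=> y; rewrite /G mule_ge0 // lee_fin normal_pdf_ge0.
rewrite -ge0_integralZl_EFin //; last 2 first.
  by move=> y _; rewrite /G mule_ge0 // lee_fin normal_pdf_ge0.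
  by rewrite invr_ge0 ltW.
apply: eq_integral => y _; rewrite /G muleCA -EFinM -pdf_scale //.
Qed.

End Pdf.

Section G2.
Context {R : realType}.
Local Notation mu := (@lebesgue_measure R).

Lemma pdf_prod (s1 s2 a x z : R) : 0 < s1 -> 0 < s2 ->
  normal_pdf 0 s1 x * normal_pdf 0 s2 (z - a * x) =
  normal_pdf 0 (Num.sqrt (a^+2 * s1^+2 + s2^+2)) z *
  normal_pdf (a * z * s1^+2 / (a^+2 * s1^+2 + s2^+2))
     (s1 * s2 / Num.sqrt (a^+2 * s1^+2 + s2^+2)) x.
Proof.
move=> s10 s20.
have S2gt0 : 0 < a^+2 * s1^+2 + s2^+2.
  by apply: ltr_wpDl; [apply: mulr_ge0; apply: sqr_ge0 | apply: exprn_gt0].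
set S2 := a^+2 * s1^+2 + s2^+2 in S2gt0 *.
have S0 : 0 < Num.sqrt S2 by rewrite sqrtr_gt0.
have HS : Num.sqrt S2 ^+ 2 = S2 by rewrite sqr_sqrtr // ltW.
rewrite !pdfE //; last by rewrite divr_gt0 // mulr_gt0.
rewrite mulrACA -expRD [RHS]mulrACA -expRD.
congr (_ * expR _).
  by field; rewrite ?gt_eqF ?kk_gt0.
rewrite !expr_div_n HS /S2.
field.
by rewrite !gt_eqF // exprMn.
Qed.


Definition Kf (s2 a : R) (h : R -> R) (p : R * R) : \bar R :=
  (h p.2 * normal_pdf 0 s2 (p.2 - a * p.1))%:E.
Definition K2f (s1 s2 a : R) (h : R -> R) (p : R * R) : \bar R :=
  ((normal_pdf 0 s1 p.1)%:E * Kf s2 a h p)%E.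

Lemma G2 (s1 s2 a : R) (h : R -> R) : 0 < s1 -> 0 < s2 ->
  measurable_fun setT h -> (forall x, 0 <= h x) ->
  (\int[normal_prob 0 s1]_x \int[normal_prob 0 s2]_y (h (a * x + y)%R)%:E
   = \int[normal_prob 0 (Num.sqrt (a^+2 * s1^+2 + s2^+2))]_y (h y)%:E)%E.
Proof.
move=> s10 s20 mh h0.
pose K := Kf s2 a h.
have mK : measurable_fun setT K.
  apply/measurable_EFinP; apply: measurable_funM.
    exact: (measurableT_comp mh measurable_snd).
  apply: (measurableT_comp (measurable_normal_pdf 0 s2)).
  apply: measurable_funB; first exact: measurable_snd.
  by apply: measurable_funM => //; exact: measurable_fst.
have K0 : forall p, (0 <= K p)%E.
  by move=> p; rewrite lee_fin mulr_ge0 // normal_pdf_ge0.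
have mKx : forall x, measurable_fun setT (fun z => K (x, z)).
  move=> x; apply/measurable_EFinP; apply: measurable_funM => //.
  apply: (measurableT_comp (measurable_normal_pdf 0 s2)).
  by rewrite /=; apply: measurable_funB.
have inner : forall x, (\int[normal_prob 0 s2]_y (h (a * x + y)%R)%:E
                       = \int[mu]_z K (x, z))%E.
  move=> x.
  have mhx : measurable_fun setT (fun y => (h (a * x + y))%:E).
    apply/measurable_EFinP; apply: (measurableT_comp mh).
    exact: measurable_funD.
  rewrite (integral_normal _ _ _ mhx); last by move=> y; rewrite lee_fin.
  transitivity (\int[mu]_y K (x, (1 * y + a * x)%R))%E.
    apply: eq_integral => y _; rewrite /K /Kf /= -EFinM mul1r addrK addrC.
    by [].
  rewrite (integral_affine 1 (a * x) ltr01 (fun z => K (x, z)) (mKx x)); last first.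
    by move=> z; exact: K0.
  by rewrite invr1 mul1e.
transitivity (\int[normal_prob 0 s1]_x \int[mu]_z K (x, z))%E.
  refine (eq_integral _ _ _) => x _.
  exact: inner.
have mF : measurable_fun setT (fun x => \int[mu]_z K (x, z))%E.
  exact: (@measurable_fun_fubini_tonelli_F _ _ _ _ _ mu K mK K0).
rewrite (integral_normal _ _ _ mF); last first.
  by move=> x; apply: integral_ge0 => z _; exact: K0.
pose K2 := K2f s1 s2 a h.
transitivity (\int[mu]_x \int[mu]_z K2 (x, z))%E.
  apply: eq_integral => x _; rewrite muleC /K2 /K2f /=.
  by rewrite (@ge0_integralZl_EFin _ _ _ mu setT measurableT (fun z => K (x, z))
    (fun z _ => K0 (x, z)) (mKx x) _ (normal_pdf_ge0 0 s1 x)).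
have mK2 : measurable_fun setT K2.
  apply: emeasurable_funM => //; apply/measurable_EFinP.
  exact: (measurableT_comp (measurable_normal_pdf 0 s1) measurable_fst).
rewrite (@fubini_tonelli _ _ _ _ _ mu mu K2 mK2); last first.
  by move=> p; rewrite /K2 /K2f mule_ge0 // ?lee_fin ?normal_pdf_ge0.
have mhS : measurable_fun setT (fun y => (h y)%:E).
  exact/measurable_EFinP.
rewrite (integral_normal _ _ _ mhS); last by move=> y; rewrite lee_fin.
apply: eq_integral => z _.
rewrite /K2 /K2f /K /Kf /=.
under eq_integral => x _ do rewrite -EFinM mulrCA pdf_prod // mulrCA mulrA EFinM.
rewrite ge0_integralZl_EFin //; first last.
- by rewrite mulr_ge0 // normal_pdf_ge0.
- apply/measurable_EFinP; exact: measurable_normal_pdf.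
- by move=> x _; rewrite lee_fin normal_pdf_ge0.
by rewrite integral_normal_pdf mule1 mulrC EFinM.
Qed.

End G2.

Section Iter.
Context {R : realType}.
Local Notation mu := (@lebesgue_measure R).

Lemma integral_normal01_oppr (f : R -> \bar R) :
  measurable_fun setT f -> (forall x, 0 <= f x)%E ->
  (\int[normal_prob 0 1]_z f (- z)%R = \int[normal_prob 0 1]_z f z)%E.
Proof.
move=> mf f0.
have mfN : measurable_fun setT (fun z : R => f (- z)).
  by apply: (measurableT_comp mf); apply: measurable_funN.
rewrite (integral_normal _ _ _ mfN); last by move=> z; exact: f0.
rewrite (integral_normal _ _ _ mf f0).
pose G y := (f y * (normal_pdf 0 1 y)%:E)%E.
have mG : measurable_fun setT G.
  apply: emeasurable_funM => //; apply/measurable_EFinP.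
  exact: measurable_normal_pdf.
transitivity (\int[mu]_z G (- z)%R)%E.
  apply: eq_integral => z _; rewrite /G !pdfE // !subr0 sqrrN.
  by [].
rewrite integral_oppr //.
by move=> y; rewrite /G mule_ge0 // lee_fin normal_pdf_ge0.
Qed.

Lemma integral_prob_cst (m s : R) (c : \bar R) :
  (\int[normal_prob m s]_z c = c)%E.
Proof.
rewrite integral_cst //; transitivity (c * 1)%E; last by rewrite mule1.
by congr (_ * _)%E; exact: probability_setT.
Qed.

Definition wtail {d} (w : 'rV[R]_d.+1) : 'rV[R]_d := \row_(i < d) w 0 (lift ord0 i).

Lemma dotp_cons d (w : 'rV[R]_d.+1) x l :
  dotp w (vec_of_seq d.+1 (x :: l)) = w 0 0 * x + dotp (wtail w) (vec_of_seq d l).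
Proof.
rewrite /dotp big_ord_recl !mxE /=; congr (_ + _).
by apply: eq_bigr => i _; rewrite !mxE.
Qed.

Lemma dotp_self_cons d (w : 'rV[R]_d.+1) :
  dotp w w = w 0 0 ^+ 2 + dotp (wtail w) (wtail w).
Proof.
rewrite /dotp big_ord_recl expr2; congr (_ + _).
by apply: eq_bigr => i _; rewrite !mxE.
Qed.

Lemma dotp_self_ge0 d (w : 'rV[R]_d) : 0 <= dotp w w.
Proof. by rewrite /dotp sumr_ge0 // => i _; rewrite -expr2 sqr_ge0. Qed.


Lemma enorm_ge0 d (w : 'rV[R]_d) : 0 <= enorm w.
Proof. exact: sqrtr_ge0. Qed.

Lemma mhk (h : R -> R) (k : R) : measurable_fun setT h ->
  measurable_fun setT (fun u => (h (k + u))%:E).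
Proof.
move=> mh; apply/measurable_EFinP; apply: (measurableT_comp mh).
by apply: measurable_funD.
Qed.

Lemma iterL (s : R) (s0 : 0 < s) d : forall (w : 'rV[R]_d) (h : R -> R) (k : R),
  measurable_fun setT h -> (forall x, 0 <= h x) ->
  gauss_iter_int s d (fun l => (h (k + dotp w (vec_of_seq d l)))%:E) =
  (\int[normal_prob 0 1]_z (h (k + s * enorm w * z)%R)%:E)%E.
Proof.
elim: d => [|d IH] w h k mh h0.
  rewrite /= /enorm /dotp !big_ord0 sqrtr0 mulr0 addr0.
  transitivity (\int[normal_prob 0 1]_z (h k)%:E)%E.
    by rewrite integral_prob_cst.
  by apply: eq_integral => z _; rewrite mul0r addr0.
rewrite /=.
transitivity (\int[normal_prob 0 s]_x \int[normal_prob 0 1]_z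
   (h ((k + w 0 0 * x) + s * enorm (wtail w) * z)%R)%:E)%E.
  apply: eq_integral => x _.
  rewrite -(IH (wtail w) h (k + w 0 0 * x) mh h0).
  congr (gauss_iter_int _ _ _); apply: funext => l.
  by rewrite dotp_cons addrA.
have Ew : dotp w w = w 0 0 ^+ 2 + dotp (wtail w) (wtail w) := dotp_self_cons _ w.
have D0 := dotp_self_ge0 _ (wtail w).
set D' := dotp (wtail w) (wtail w) in Ew D0.
have [tz|tp] := eqVneq (enorm (wtail w)) 0.
  have D'0 : D' = 0.
    by move: tz; rewrite /enorm -/D' => /eqP; rewrite sqrtr_eq0 => H; apply/le_anti/andP.
  have Enw : enorm w = `|w 0 0|.
    by rewrite /enorm Ew D'0 addr0 sqrtr_sqr.
  transitivity (\int[normal_prob 0 s]_x (h (k + w 0 0 * x)%R)%:E)%E.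
    apply: eq_integral => x _; rewrite tz mulr0.
    under eq_integral => z _ do rewrite mul0r addr0.
    by rewrite integral_prob_cst.
  rewrite Enw.
  have [w0|w0n] := eqVneq (w 0 0) 0.
    rewrite w0 normr0.
    under eq_integral => x _ do rewrite mul0r addr0.
    under [RHS]eq_integral => x _ do rewrite mulr0 mul0r addr0.
    by rewrite !integral_prob_cst.
  have mg : measurable_fun setT (fun x => (h (k + w 0 0 * x))%:E).
    apply/measurable_EFinP; apply: (measurableT_comp mh).
    by apply: measurable_funD => //; apply: measurable_funM.
  have g0 : forall x, (0 <= (h (k + w 0 0 * x))%:E)%E.
    by move=> x; rewrite lee_fin.
  rewrite -(integral_normal_scale 0 s _ s0 mg g0).
  have [wp|wn] := ltrP 0 (w 0 0).
    apply: eq_integral => z _; rewrite gtr0_norm //.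
    by congr ((h _)%:E); ring.
  have mf : measurable_fun setT (fun z => (h (k + s * `|w 0 0| * z))%:E).
    apply/measurable_EFinP; apply: (measurableT_comp mh).
    by apply: measurable_funD => //; apply: measurable_funM.
  rewrite -(integral_normal01_oppr _ mf); last by move=> z; rewrite lee_fin.
  apply: eq_integral => z _; rewrite ler0_norm //.
  by congr ((h _)%:E); ring.
have t1p : 0 < s * enorm (wtail w).
  by rewrite mulr_gt0 // lt0r tp enorm_ge0.
set t1 := s * enorm (wtail w) in t1p *.
transitivity (\int[normal_prob 0 s]_x \int[normal_prob 0 t1]_y
   (h (k + (w 0 0 * x + y)))%:E)%E.
  apply: eq_integral => x _.
  have mg : measurable_fun setT (fun y => (h (k + (w 0 0 * x + y)))%:E).
    apply/measurable_EFinP; apply: (measurableT_comp mh).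
    by apply: measurable_funD => //; apply: measurable_funD.
  have g0 : forall y, (0 <= (h (k + (w 0 0 * x + y)))%:E)%E.
    by move=> y; rewrite lee_fin.
  rewrite -(integral_normal_scale 0 t1 _ t1p mg g0).
  by apply: eq_integral => z _; congr ((h _)%:E); ring.
have mh' : measurable_fun setT (fun u => h (k + u)).
  by apply: (measurableT_comp mh); apply: measurable_funD.
rewrite (G2 s t1 (w 0 0) _ s0 t1p mh'); last by move=> u; exact: h0.
have Sp : 0 < Num.sqrt (w 0 0 ^+ 2 * s ^+ 2 + t1 ^+ 2).
  rewrite sqrtr_gt0; apply: ltr_wpDl; first by rewrite mulr_ge0 // sqr_ge0.
  exact: exprn_gt0.
have ES : Num.sqrt (w 0 0 ^+ 2 * s ^+ 2 + t1 ^+ 2) = s * enorm w.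
  rewrite /t1 /enorm Ew -/D' exprMn (sqr_sqrtr D0).
  rewrite (_ : w 0 0 ^+ 2 * s ^+ 2 + s ^+ 2 * D' = s ^+ 2 * (w 0 0 ^+ 2 + D')); last by ring.
  by rewrite sqrtrM ?sqr_ge0 // sqrtr_sqr gtr0_norm.
have mg : measurable_fun setT (fun y => (h (k + y))%:E).
  exact/measurable_EFinP.
have g0 : forall y, (0 <= (h (k + y))%:E)%E by move=> y; rewrite lee_fin.
rewrite -(integral_normal_scale 0 _ _ Sp mg g0).
by apply: eq_integral => z _; rewrite ES addr0.
Qed.

End Iter.

Section Tail.
Context {R : realType}.
Local Notation mu := (@lebesgue_measure R).
Local Notation phi := (normal_pdf (0:R) 1).

Lemma pdf_shift (y c : R) :
  phi (y + c) = expR (- (c ^+ 2 / 2)) * (phi y * expR (- (c * y))).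
Proof.
rewrite !pdfE //.
  rewrite (_ : - (y + c - 0) ^+ 2 / (1 ^+ 2 * 2) =
     - (c ^+ 2 / 2) + (- (y - 0) ^+ 2 / (1 ^+ 2 * 2) + - (c * y))); last by field.
  by rewrite !expRD; ring.
Qed.

Definition tilt_int (t c : R) : \bar R :=
  (\int[mu]_(y in `[t, +oo[) (phi y * expR (- (c * y)))%:E)%E.

Lemma measurable_tilt_fun (c : R) :
  measurable_fun setT (fun y : R => (phi y * expR (- (c * y)))%:E).
Proof.
apply/measurable_EFinP; apply: measurable_funM.
  exact: measurable_normal_pdf.
by apply: measurableT_comp; [exact: measurable_expR | apply: measurable_funN; apply: measurable_funM].
Qed.

Lemma tilt (t c : R) :
  normal_prob 0 1 `[t + c, +oo[ = ((expR (- (c ^+ 2 / 2)))%:E * tilt_int t c)%E.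
Proof.
rewrite /normal_prob /tilt_int integral_mkcond [in RHS]integral_mkcond.
set G := (fun x => (phi x)%:E) \_ _.
have mG : measurable_fun setT G.
  apply/(measurable_restrictT _ _).1 => //.
  by apply/measurable_funTS/measurable_EFinP; exact: measurable_normal_pdf.
have G0 : forall x, (0 <= G x)%E.
  by move=> x; rewrite /G /patch; case: ifP => // _; rewrite lee_fin normal_pdf_ge0.
have := integral_affine 1 c ltr01 G mG G0; rewrite invr1 mul1e => <-.
set H := (fun y => (phi y * expR (- (c * y)))%:E) \_ _.
have H0 : forall y, setT y -> (0 <= H y)%E.
  by move=> y _; rewrite /H /patch; case: ifP => // _; rewrite lee_fin mulr_ge0 ?expR_ge0 ?normal_pdf_ge0.
have mH : measurable_fun setT H.
  apply/(measurable_restrictT _ _).1 => //.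
  by apply: measurable_funTS; exact: measurable_tilt_fun.
rewrite -(@ge0_integralZl_EFin _ _ _ mu setT measurableT H H0 mH _ (expR_ge0 (- (c ^+ 2 / 2)))).
apply: eq_integral => y _; rewrite /G /H /patch /= mul1r.
have -> : (y + c \in `[t + c, +oo[%classic) = (y \in `[t, +oo[%classic).
  apply/idP/idP => /set_mem /=; rewrite !in_itv /= !andbT => Hy;
    apply/mem_set => /=; rewrite in_itv /= andbT; move: Hy; rewrite lerD2r //.
case: ifP => _; last by rewrite mule0.
by rewrite -EFinM pdf_shift.
Qed.


Local Notation N := (normal_prob (0:R) 1).

Lemma N_fin (X : set R) : measurable X -> N X \is a fin_num.
Proof.
move=> mX; rewrite ge0_fin_numE ?measure_ge0 //.
by apply: (le_lt_trans (probability_le1 N mX)); rewrite ltry.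
Qed.

Lemma intZphi (D : set R) (k : R) : measurable D -> 0 <= k ->
  (k%:E * \int[mu]_(x in D) (phi x)%:E = \int[mu]_(x in D) (k%:E * (phi x)%:E))%E.
Proof.
move=> mD k0; rewrite ge0_integralZl_EFin //.
- by move=> y _; rewrite lee_fin normal_pdf_ge0.
- by apply/measurable_funTS/measurable_EFinP; exact: measurable_normal_pdf.
Qed.

Lemma tilt_lb (t M c : R) : 0 <= c -> t <= M ->
  ((expR (- (c * M)))%:E * N `[t, M[%classic <= tilt_int t c)%E.
Proof.
move=> c0 tM.
apply: (@le_trans _ _ (\int[mu]_(y in `[t, M[) (phi y * expR (- (c * y)))%:E)%E); last first.
  apply: ge0_subset_integral => //.
  - by apply: measurable_funTS; exact: measurable_tilt_fun.
  - by move=> y _; rewrite lee_fin mulr_ge0 ?expR_ge0 ?normal_pdf_ge0.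
  - move=> y /=; rewrite !in_itv /= => /andP[-> _] //.
rewrite /normal_prob intZphi // ?expR_ge0 //.
apply: ge0_le_integral => //.
- by move=> y _; rewrite lee_fin mulr_ge0 ?expR_ge0 ?normal_pdf_ge0.
- apply/measurable_funTS/measurable_EFinP; apply: measurable_funM => //.
  exact: measurable_normal_pdf.
- by apply: measurable_funTS; exact: measurable_tilt_fun.
move=> y /=; rewrite in_itv /= => /andP[_ yM].
rewrite -EFinM lee_fin mulrC; apply: ler_wpM2l; first exact: normal_pdf_ge0.
rewrite ler_expR lerN2.
by apply: ler_wpM2l => //; exact: ltW.
Qed.

Lemma tilt_ub (t c : R) : 0 <= c ->
  (tilt_int t c <= (expR (- (c * t)))%:E * N `[t, +oo[%classic)%E.
Proof.
move=> c0.
rewrite /normal_prob intZphi // ?expR_ge0 //.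
apply: ge0_le_integral => //.
- by move=> y _; rewrite lee_fin mulr_ge0 ?expR_ge0 ?normal_pdf_ge0.
- by apply: measurable_funTS; exact: measurable_tilt_fun.
- apply/measurable_funTS/measurable_EFinP; apply: measurable_funM => //.
  exact: measurable_normal_pdf.
move=> y /=; rewrite in_itv /= andbT => ty.
rewrite -EFinM lee_fin [X in _ <= X]mulrC; apply: ler_wpM2l; first exact: normal_pdf_ge0.
rewrite ler_expR lerN2.
exact: ler_wpM2l.
Qed.

Lemma N_split (t M : R) : t <= M ->
  N `[t, +oo[%classic = (N `[t, M[%classic + N `[M, +oo[%classic)%E.
Proof.
move=> tM; rewrite (@itv_bndbnd_setU _ _ (BLeft t) (BLeft M) +oo%O) ?bnd_simp //.
rewrite measureU //.
apply/seteqP; split => // y /= [];  rewrite !in_itv /= => /andP[_ yM].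
by rewrite andbT leNgt yM.
Qed.

Lemma N_open (t : R) : N `]t, +oo[%classic = N `[t, +oo[%classic.
Proof.
rewrite /normal_prob integral_itv_obnd_cbnd //.
by apply/measurable_funTS/measurable_EFinP; exact: measurable_normal_pdf.
Qed.

Lemma N_mono (t t' : R) : t <= t' -> (N `[t', +oo[%classic <= N `[t, +oo[%classic)%E.
Proof.
move=> tt'; apply: le_measure; rewrite ?inE //.
by move=> y /=; rewrite !in_itv /= !andbT; apply: le_trans.
Qed.

End Tail.

Section NumB.
Context {R : realType}.

Lemma x_lb : 59/100 <= expR (- (1/2) : R).
Proof.
have h1 : 15/16 <= expR (- (1/16) : R).
  by have := expR_ge1Dx (- (1/16) : R); lra.
have -> : (- (1/2) : R) = 8%:R * (- (1/16)) by lra.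
rewrite expRM_natl.
have n1 : (15/16 : R) \in Num.nneg by rewrite nnegrE; lra.
have n2 : expR (-(1/16) : R) \in Num.nneg by rewrite nnegrE expR_ge0.
have := lerXn2r 8 n1 n2 h1.
move=> H; apply: le_trans H; lra.
Qed.

Lemma x_ub : expR (- (1/2) : R) <= 61/100.
Proof.
have h1 : 65/64 <= expR (1/64 : R).
  by have := expR_ge1Dx (1/64 : R); lra.
have h2 : 100/61 <= expR (1/2 : R).
  have -> : (1/2 : R) = 32%:R * (1/64) by lra.
  rewrite expRM_natl.
  have n1 : (65/64 : R) \in Num.nneg by rewrite nnegrE; lra.
  have n2 : expR (1/64 : R) \in Num.nneg by rewrite nnegrE expR_ge0.
  have := lerXn2r 32 n1 n2 h1.
  move=> H; apply: le_trans H; lra.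
rewrite expRN.
have p : 0 < expR (1/2 : R) := expR_gt0 _.
have := mulVf (lt0r_neq0 p).
set iy := _^-1; set y := expR _ in p h2 *; nra.
Qed.


Lemma x_key : 1/20 <= expR (- (1/2) : R) ^+ 5 * (1 - expR (- (1/2) : R) ^+ 3).
Proof.
have xl := x_lb; have xu := x_ub.
set x := expR _ in xl xu *.
have x0 : 0 <= x by lra.
have n1 : (59/100 : R) \in Num.nneg by rewrite nnegrE; lra.
have n2 : x \in Num.nneg by rewrite nnegrE.
have n3 : (61/100 : R) \in Num.nneg by rewrite nnegrE; lra.
have h5 := lerXn2r 5 n1 n2 xl.
have h3 := lerXn2r 3 n2 n3 xu.
have P := mulr_ge0 (elimT (@idP _) (etrans (subr_ge0 _ _) h5)) (etrans (subr_ge0 _ _) h3).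
set X5 := x ^+ 5 in h5 P *; set X3 := x ^+ 3 in h3 P *.
nra.
Qed.

Lemma expR_x3 : expR (- (3/2) : R) = expR (- (1/2)) ^+ 3.
Proof. by rewrite -expRM_natl; congr expR; lra. Qed.
Lemma expR_x5 : expR (- (5/2) : R) = expR (- (1/2)) ^+ 5.
Proof. by rewrite -expRM_natl; congr expR; lra. Qed.
Lemma expR_x2 : expR (- 1 : R) = expR (- (1/2)) ^+ 2.
Proof. by rewrite -expRM_natl; congr expR; lra. Qed.

Lemma numbound (A T0 : R) : 0 < A -> A <= 1 -> 0 <= T0 -> A * T0 <= 1 ->
  1/20 <= expR (- (A^+2/2) - A * (T0 + 1)) * (1 - expR (- (1/2) - T0)).
Proof.
move=> A0 A1 T00 AT.
have key := x_key.
have xl := x_lb; have xu := x_ub.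
have e3 := expR_x3; have e5 := expR_x5; have e2 := expR_x2.
set x := expR (- (1/2)) in key xl xu e3 e5 e2 *.
have x0 : 0 <= x by lra.
have A2 : A ^+ 2 <= 1 by rewrite expr2; nra.
have [T1|T1] := lerP T0 1.
- have u0 : 0 <= expR (- T0) by exact: expR_ge0.
  have u1 : expR (- T0) <= 1 by rewrite expR_le1; lra.
  have u2 : x ^+ 2 <= expR (- T0) by rewrite -e2 ler_expR; lra.
  have E1 : expR (- (3/2) - T0) <= expR (- (A^+2/2) - A * (T0 + 1)).
    by rewrite ler_expR; nra.
  rewrite expRD e3 in E1.
  rewrite [expR (- (1/2) - T0)]expRD.
  set u := expR (- T0) in u0 u1 u2 E1 *.
  have xu1 : x * u <= 61/100 by nra.
  have k1 : x ^+ 2 * (1 - x ^+ 3) <= u * (1 - x * u).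
    have x3 : x ^+ 3 <= 1/4.
      have n2 : x \in Num.nneg by rewrite nnegrE.
      have n3 : (61/100 : R) \in Num.nneg by rewrite nnegrE; lra.
      have := lerXn2r 3 n2 n3 xu; lra.
    have a1 : 0 <= u - x ^+ 2 by lra.
    have a2 : 0 <= 1 - x * u - x ^+ 3 by lra.
    have P := mulr_ge0 a1 a2.
    nra.
  have x3p : 0 <= x ^+ 3 by rewrite exprn_ge0.
  have k2 : x ^+ 5 * (1 - x ^+ 3) <= x ^+ 3 * u * (1 - x * u).
    have -> : x ^+ 5 * (1 - x ^+ 3) = x ^+ 3 * (x ^+ 2 * (1 - x ^+ 3)) by ring.
    rewrite -mulrA; exact: ler_wpM2l.
  apply: (le_trans key); apply: (le_trans k2).
  apply: ler_wpM2r; first lra.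
  exact: E1.
- have E1 : expR (- (5/2)) <= expR (- (A^+2/2) - A * (T0 + 1)).
    by rewrite ler_expR; nra.
  rewrite e5 in E1.
  have E2 : expR (- (1/2) - T0) <= x ^+ 3 by rewrite -e3 ler_expR; lra.
  have x3 : x ^+ 3 <= 1/4.
    have n2 : x \in Num.nneg by rewrite nnegrE.
    have n3 : (61/100 : R) \in Num.nneg by rewrite nnegrE; lra.
    have := lerXn2r 3 n2 n3 xu; lra.
  apply: (le_trans key); apply: ler_pM.
  + by rewrite exprn_ge0.
  + lra.
  + exact: E1.
  + lra.
Qed.

End NumB.

Section Main1D.
Context {R : realType}.
Local Notation mu := (@lebesgue_measure R).
Local Notation phi := (normal_pdf (0:R) 1).
Local Notation N := (normal_prob (0:R) 1).

Lemma N_pos (t : R) : (0 < N `[t, +oo[%classic)%E.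
Proof.
set c0 := (1 * kk)^-1 * expR (- ((`|t| + 1) ^+ 2 / (1 ^+ 2 * 2))) : R.
have c0p : 0 < c0 by rewrite mulr_gt0 ?expR_gt0 // invr_gt0 mul1r kk_gt0.
apply: (@lt_le_trans _ _ (N `[t, t + 1[%classic)); last first.
  apply: le_measure; rewrite ?inE //.
  by move=> y /=; rewrite !in_itv /= andbT => /andP[].
apply: (@lt_le_trans _ _ (\int[mu]_(x in `[t, (t + 1)%R[) (cst c0%:E) x)%E).
  have L : mu `[t, (t + 1)%R[%classic = 1%E.
    by rewrite lebesgue_measure_itv /= lte_fin ltrDl ltr01 -EFinD addrAC subrr add0r.
  rewrite integral_cst //.
  apply: (@lt_le_trans _ _ (c0%:E * 1)%E); first by rewrite mule1 lte_fin.
  by rewrite le_eqVlt; apply/orP; left; apply/eqP; congr (_ * _)%E; exact/esym/L.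
rewrite /normal_prob; apply: ge0_le_integral => //.
- by move=> y _; rewrite lee_fin ltW.
- by apply/measurable_funTS/measurable_EFinP; exact: measurable_normal_pdf.
move=> y /=; rewrite in_itv /= => /andP[ty yt].
rewrite lee_fin pdfE // /c0.
apply: ler_wpM2l; first by rewrite invr_ge0 mul1r ltW // kk_gt0.
rewrite ler_expR.
have n0 : 0 <= `|t| by exact: normr_ge0.
have h1 : - (`|t| + 1) <= y.
  apply: le_trans ty; have := ler_norm (- t); rewrite normrN; lra.
have h2 : y <= `|t| + 1.
  by apply: ltW; apply: (lt_le_trans yt); rewrite lerD2r ler_norm.
have hy : y ^+ 2 <= (`|t| + 1) ^+ 2.
  have P := mulr_ge0 (etrans (subr_ge0 _ _) h2) (etrans (subr_ge0 _ _) h1).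
  nra.
rewrite subr0 expr1n mul1r; lra.
Qed.


Lemma N_fini (i : interval R) : N [set` i] \is a fin_num.
Proof. by apply: N_fin. Qed.

Lemma tilt_fin (t c : R) : 0 <= c -> tilt_int t c \is a fin_num.
Proof.
move=> c0; rewrite ge0_fin_numE; last first.
  by apply: integral_ge0 => y _; rewrite lee_fin mulr_ge0 ?expR_ge0 ?normal_pdf_ge0.
apply: (le_lt_trans (tilt_ub t c c0)).
by rewrite -(fineK (N_fini _)) -EFinM ltry.
Qed.

Lemma tail_main (T A : R) : 0 < A -> A <= 1 -> A * T <= 1 ->
  0 < fine (N `[T, +oo[%classic) /\
  1/20 * fine (N `[T, +oo[%classic) <= fine (N `]T + A, +oo[%classic).
Proof.
move=> A0 A1 AT.
have [T0 [TT0 [T00 AT0]]] : exists T0, T <= T0 /\ 0 <= T0 /\ A * T0 <= 1.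
  by have [HT|HT] := lerP T 0; [exists 0 | exists T]; split; try split; lra.
have Eb : fine (N `]T + A, +oo[%classic) = expR (- (A ^+ 2 / 2)) * fine (tilt_int T A).
  by rewrite N_open tilt fineM // tilt_fin // ltW.
have TM : T <= T0 + 1 by lra.
have Ln : expR (- (A * (T0 + 1))) * fine (N `[T, T0 + 1[%classic) <= fine (tilt_int T A).
  have := tilt_lb T (T0 + 1) A (ltW A0) TM.
  move=> /(fine_le _ (tilt_fin _ _ (ltW A0))).
  rewrite fineM ?N_fini //.
  by apply; apply: fin_numM => //; exact: N_fini.
have Es : fine (N `[T, +oo[%classic) =
    fine (N `[T, T0 + 1[%classic) + fine (N `[T0 + 1, +oo[%classic).
  by rewrite (N_split T (T0 + 1) TM) fineD ?N_fini.
have Em : fine (N `[T0 + 1, +oo[%classic) = expR (- (1 / 2)) * fine (tilt_int T0 1).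
  by rewrite tilt fineM // ?tilt_fin // expr1n.
have Lj : fine (tilt_int T0 1) <= expR (- T0) * fine (N `[T0, +oo[%classic).
  have := tilt_ub T0 1 ler01.
  move=> /(fine_le (tilt_fin _ _ ler01)).
  rewrite fineM ?N_fini // mul1r.
  by apply; apply: fin_numM => //; exact: N_fini.
have Lq : fine (N `[T0, +oo[%classic) <= fine (N `[T, +oo[%classic).
  by apply: fine_le; rewrite ?N_fini //; exact: N_mono.
have pa : 0 < fine (N `[T, +oo[%classic).
  apply: fine_gt0; rewrite N_pos /=.
  by rewrite -(fineK (N_fini _)) ltry.
split => //.
have nb := numbound A T0 A0 A1 T00 AT0.
rewrite expRD [expR (- (1/2) - T0)]expRD in nb.
set a := fine (N `[T, +oo[%classic) in Es Lq pa *.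
set b := fine (N `]T + A, +oo[%classic) in Eb *.
set n1 := fine (N `[T, T0 + 1[%classic) in Ln Es.
set m := fine (N `[T0 + 1, +oo[%classic) in Es Em.
set q0 := fine (N `[T0, +oo[%classic) in Lj Lq.
set iA := fine (tilt_int T A) in Eb Ln.
set j := fine (tilt_int T0 1) in Em Lj.
set e1 := expR (- (A ^+ 2 / 2)) in Eb nb.
set e2 := expR (- (A * (T0 + 1))) in Ln nb.
set e3 := expR (- (1 / 2)) in Em nb.
set e4 := expR (- T0) in Lj nb.
have e1p : 0 <= e1 by exact: expR_ge0.
have e2p : 0 <= e2 by exact: expR_ge0.
have e3p : 0 <= e3 by exact: expR_ge0.
have e4p : 0 <= e4 by exact: expR_ge0.
have S3 : m <= e3 * e4 * a.
  rewrite Em -mulrA; apply: ler_wpM2l => //.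
  apply: (le_trans Lj); exact: ler_wpM2l.
have S4 : (1 - e3 * e4) * a <= n1 by lra.
have S5 : e1 * e2 * ((1 - e3 * e4) * a) <= b.
  rewrite Eb -mulrA; apply: ler_wpM2l => //.
  apply: le_trans Ln; exact: ler_wpM2l.
apply: le_trans S5.
rewrite mulrA; apply: ler_wpM2r; first exact: ltW.
exact: nb.
Qed.

End Main1D.

Section Assemble.
Context {R : realType}.
Local Notation N := (normal_prob (0:R) 1).

Lemma enorm_gt0 d (beta : 'rV[R]_d) : beta != 0 -> 0 < enorm beta.
Proof.
move=> b0; rewrite /enorm sqrtr_gt0 lt_def dotp_self_ge0 andbT.
apply: contra b0 => /eqP H.
have nn : forall j : 'I_d, true -> 0 <= beta 0 j * beta 0 j.
  by move=> j _; rewrite -expr2 sqr_ge0.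
apply/eqP/rowP => i; rewrite !mxE.
have := @psumr_eq0P R _ (fun _ => true) (fun j => beta 0 j * beta 0 j) nn H i isT.
by move=> /eqP; rewrite mulf_eq0 orbb => /eqP.
Qed.

Lemma gauss_half_lt (s : R) d (beta : 'rV[R]_d) (c : R) : 0 < s -> 0 < enorm beta ->
  gauss_prob s [set e | c < dotp beta e] = N `](c / (s * enorm beta)), +oo[%classic.
Proof.
move=> s0 bp.
set h := \1_(`]c, +oo[%classic) : R -> R.
have mh : measurable_fun setT h by exact: measurable_indic.
have h0 : forall x, 0 <= h x by move=> x; rewrite /h indicE.
rewrite /gauss_prob.
have -> : (fun l => (\1_[set e | c < dotp beta e] (vec_of_seq d l) : R)%:E) =
          (fun l => (h (0 + dotp beta (vec_of_seq d l)))%:E).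
  apply: funext => l; rewrite add0r /h !indicE; congr ((nat_of_bool _)%:R%:E).
  apply/idP/idP => /set_mem /= H; apply/mem_set => //=.
    by rewrite in_itv /= andbT.
  by move: H; rewrite in_itv /= andbT.
rewrite iterL //.
have k0 : 0 < s * enorm beta by rewrite mulr_gt0.
transitivity (\int[N]_z (\1_(`](c / (s * enorm beta)), +oo[%classic) z : R)%:E)%E.
  apply: eq_integral => z _; rewrite /h add0r !indicE; congr ((nat_of_bool _)%:R%:E).
  apply/idP/idP => /set_mem /=; rewrite !in_itv /= !andbT => H; apply/mem_set => /=;
    rewrite in_itv /= andbT.
    by rewrite ltr_pdivrMr // mulrC.
  by move: H; rewrite ltr_pdivrMr // mulrC.
by rewrite integral_indic // setIT.
Qed.

Lemma gauss_half_le (s : R) d (beta : 'rV[R]_d) (c : R) : 0 < s -> 0 < enorm beta ->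
  gauss_prob s [set e | c <= dotp beta e] = N `[(c / (s * enorm beta)), +oo[%classic.
Proof.
move=> s0 bp.
set h := \1_(`[c, +oo[%classic) : R -> R.
have mh : measurable_fun setT h by exact: measurable_indic.
have h0 : forall x, 0 <= h x by move=> x; rewrite /h indicE.
rewrite /gauss_prob.
have -> : (fun l => (\1_[set e | c <= dotp beta e] (vec_of_seq d l) : R)%:E) =
          (fun l => (h (0 + dotp beta (vec_of_seq d l)))%:E).
  apply: funext => l; rewrite add0r /h !indicE; congr ((nat_of_bool _)%:R%:E).
  apply/idP/idP => /set_mem /= H; apply/mem_set => //=.
    by rewrite in_itv /= andbT.
  by move: H; rewrite in_itv /= andbT.
rewrite iterL //.
have k0 : 0 < s * enorm beta by rewrite mulr_gt0.
transitivity (\int[N]_z (\1_(`[(c / (s * enorm beta)), +oo[%classic) z : R)%:E)%E.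
  apply: eq_integral => z _; rewrite /h add0r !indicE; congr ((nat_of_bool _)%:R%:E).
  apply/idP/idP => /set_mem /=; rewrite !in_itv /= !andbT => H; apply/mem_set => /=;
    rewrite in_itv /= andbT.
    by rewrite ler_pdivrMr // mulrC.
  by move: H; rewrite ler_pdivrMr // mulrC.
by rewrite integral_indic // setIT.
Qed.

End Assemble.

Theorem lemma19 (R : realType) (d : nat) (sigma r : R) :
  0 < sigma -> sigma <= r ->
  has_margins (gauss_prob sigma (d := d)) r (sigma ^+ 2 / r) (1 / 20).
Proof.
move=> s0 sr beta b b0 hb.
have r0 : 0 < r by apply: lt_le_trans sr.
have bp := enorm_gt0 _ _ b0.
set nb := enorm beta in bp hb *.
have sub : [set e | b + sigma ^+ 2 / r * nb < dotp beta e] `&` [set e | b <= dotp beta e]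
         = [set e | b + sigma ^+ 2 / r * nb < dotp beta e].
  apply/seteqP; split => e /=; first by case.
  move=> H; split => //; apply: ltW; apply: le_lt_trans H.
  by rewrite lerDl; apply: mulr_ge0; [apply: divr_ge0; [exact: sqr_ge0 | exact: ltW] | exact: ltW].
rewrite /cond_prob sub gauss_half_lt // gauss_half_le //.
set T := b / (sigma * nb).
set Aa := sigma / r.
have E1 : (b + sigma ^+ 2 / r * nb) / (sigma * nb) = T + Aa.
  by rewrite /T /Aa; field; rewrite !gt_eqF.
rewrite E1.
have A0 : 0 < Aa by rewrite divr_gt0.
have A1 : Aa <= 1 by rewrite ler_pdivrMr // mul1r.
have AT : Aa * T <= 1.
  rewrite /Aa /T.
  have -> : sigma / r * (b / (sigma * nb)) = b / (r * nb) by field; rewrite !gt_eqF.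
  by rewrite ler_pdivrMr ?mulr_gt0 // mul1r.
have [pa key] := tail_main T Aa A0 A1 AT.
by rewrite ler_pdivlMr // mulrC.
Qed.
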